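(* Let $(G,\cdot)$ be a finite group and let $\psi\in\operatorname{End}(G,\cdot)$ be non-trivial and idempotent ($\psi\circ\psi=\psi$) with $\psi([[G,\psi],G])\le Z(G,\cdot)$. Let $N=\{h\mapsto g\,\psi(g)^{-1}h\,\psi(g) : g\in G\}\le\operatorname{Perm}(G)$. Then $N\cong(\ker\psi,\cdot)\times(\psi(G),\cdot)$.
   Context: $\operatorname{Perm}(G)$ is the group of permutations of the set $G$. For $\psi\in\operatorname{End}(G,\cdot)$, $[g,\psi]=g\cdot\psi(g)^{-1}$ and $[G,\psi]$ is the subgroup generated by these elements; $[x,y]=xyx^{-1}y^{-1}$ and $[A,B]$ is the subgroup generated by $[a,b]$, $a\in A,b\in B$; $Z(G,\cdot)$ is the centre. *)

(* Defs.v *)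
From mathcomp Require Import all_boot all_fingroup all_solvable.
Set Implicit Arguments. Unset Strict Implicit. Unset Printing Implicit Defensive.
Import GroupScope.
Local Open Scope group_scope.

Section Defs.
Variable gT : finGroupType.

(* paper's commutator convention: [x,y] = x y x^-1 y^-1 *)
Definition pcomm (x y : gT) : gT := x * y * x^-1 * y^-1.

Definition pcommg (A B : {set gT}) : {set gT} :=
  <<[set pcomm a b | a in A, b in B]>>.

Definition commpsi (G : {set gT}) (psi : gT -> gT) : {set gT} :=
  <<[set g * (psi g)^-1 | g in G]>>.

Definition nmap (psi : gT -> gT) (g : gT) (h : gT) : gT :=
  g * (psi g)^-1 * h * psi g.

Lemma nmap_inj psi g : injective (nmap psi g).
Proof. by move=> x y; rewrite /nmap => /mulIg /mulgI. Qed.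

Definition nperm (psi : gT -> gT) (g : gT) : {perm gT} := perm (@nmap_inj psi g).

Definition Nset (psi : gT -> gT) : {set {perm gT}} :=
  [set nperm psi g | g in [set: gT]].
End Defs.

(* Main.v *)
Require Import Defs.
From mathcomp Require Import all_boot all_fingroup all_solvable.
Import GroupScope.
Local Open Scope group_scope.

Lemma fpinj (gT : finGroupType) (x : gT * gT) : injective (fun h => x.1^-1 * h * x.2).
Proof. by move=> a b /mulIg /mulgI. Qed.

Definition fp (gT : finGroupType) (x : gT * gT) : {perm gT} := perm (@fpinj gT x).

Lemma fpM (gT : finGroupType) : {in [set: gT * gT] &, {morph (@fp gT) : x y / x * y}}.
Proof.
move=> [x1 x2] [y1 y2] _ _; apply/permP => h; rewrite permM !permE /=.
by rewrite invMg !mulgA.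
Qed.

Canonical fM (gT : finGroupType) := Morphism (@fpM gT).

Theorem mainTheorem10 (gT : finGroupType)
  (psi : {morphism [set: gT] >-> gT})
  (nontriv : exists g : gT, psi g != 1)
  (idem : forall g : gT, psi (psi g) = psi g)
  (hcent : psi @* pcommg (commpsi [set: gT] psi) [set: gT] \subset 'Z([set: gT])) :
  group_set (Nset psi) /\
  Nset psi \isog setX ('ker psi) (psi @* [set: gT]).
Proof.
set K := 'ker psi; set H := psi @* [set: gT].
have sXT : setX K H \subset [set: gT * gT] by apply: subsetT.
set rM := restrm sXT (fM gT).
have eqN : Nset psi = rM @* setX K H.
  rewrite morphim_restrm setIid.
  apply/setP => p; apply/imsetP/morphimP.
  - move=> [g _ ->]; exists (psi g * g^-1, psi g); first by rewrite inE.
      apply/setXP; split; last by apply: mem_morphim; rewrite inE.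
      rewrite /K; apply/kerP; first by rewrite inE.
      by rewrite morphM ?inE // morphV ?inE // idem mulgV.
    apply/permP => h; rewrite !permE /nmap /=.
    by rewrite invMg invgK.
  - move=> [[k a] _ /setXP [kK aH] ->]; exists (k^-1 * a); first by rewrite inE.
    have psia : psi a = a.
      by case/morphimP: aH => b _ _ ->; rewrite idem.
    have psik : psi (k^-1 * a) = a.
      by rewrite morphM ?inE // morphV ?inE // (mker kK) invg1 mul1g psia.
    apply/permP => h; rewrite !permE /nmap /= psik.
    by rewrite mulgK.
have injr : 'injm rM.
  apply/injmP => [[x1 x2] [y1 y2]] /setXP [x1K x2H] /setXP [y1K y2H].
  rewrite /rM /= => E.
  have E1 := congr1 (fun p : {perm gT} => p 1) E.
  move: E1; rewrite /= !permE /= !mulg1 => E1.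
  set c := y1 * x1^-1.
  have c2 : c = y2 * x2^-1.
    have e : y1 * (x1^-1 * x2) = y2 by rewrite E1 mulKVg.
    by rewrite /c -e mulgA mulgK.
  have cK : c \in K by rewrite /c groupM ?groupV.
  have cH : c \in H by rewrite c2 groupM ?groupV.
  have : psi c = c by case/morphimP: cH => b _ _ ->; rewrite idem.
  rewrite (mker cK) => /esym c1.
  have ey1 : y1 = x1 by apply/eqP; rewrite eq_mulgV1 -c1.
  have ey2 : y2 = x2 by apply/eqP; rewrite eq_mulgV1 -c2 -c1.
  by rewrite ey1 ey2.
split; first by rewrite eqN; apply: groupP.
rewrite eqN isog_sym; exact: sub_isog (subxx _) injr.
Qed.
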